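(* The polynomials $f^*(n,q)$ satisfy: (a) for each $n\ge2$, $f^*(n,q)$ has degree $2n-4$ in $q$ and leading coefficient $1$; (b) for any integers $3\le n<n'$, we have $f^*(n,q)<_{\mathrm{lex}}f^*(n',q)$, and the first position at which the coefficient sequences of $f^*(n,q)$ and $f^*(n',q)$ differ is the $n$-th entry (the term of $n$-th highest order), where the two entries differ by exactly $1$.
   Context: For a polynomial $\phi$ defined on $\{-1,\dots,n-1\}$ (as a function of the integer argument) with $\phi(-1)=0$, $n\ge1$ and $-1\le k\le\frac{n-1}{2}$, let $u(\phi,n,q,k)=q^{2k+2}\phi(n-k-1)+\phi(k)+\bigl(\sum_{i=0}^kq^i\bigr)\bigl(\sum_{j=k}^{n-2}q^j\bigr)$. For $n\ge1$ let $k^*(n)=n-2^{\lfloor\log_2 n\rfloor}$ (the unique $0\le k\le\frac{n-1}{2}$ with $n-k$ a power of two). Define polynomials in $q$: $f^*(-1,q)=f^*(0,q)=f^*(1,q)=0$, $f^*(2,q)=1$, $f^*(3,q)=q^2+1$, $f^*(4,q)=q^4+2q^2+q+1$, and recursively $f^*(n,q)=u(f^*(\cdot,q),n,q,k^*(n))$ for $n\ge5$. The coefficient sequence of a nonzero polynomial lists its coefficients starting with the leading coefficient in order of decreasing power, followed by infinitely many zeros. For polynomials $g,h$ with coefficient sequences $(a_i)$, $(b_i)$, $g<_{\mathrm{lex}}h$ means there is $i\ge1$ with $a_i<b_i$ and $a_j=b_j$ for all $j<i$. *)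

(* Defs.v *)
From mathcomp Require Import all_boot all_order all_algebra.
Set Implicit Arguments. Unset Strict Implicit. Unset Printing Implicit Defensive.
Import Order.TTheory GRing.Theory Num.Theory.
Local Open Scope ring_scope.

(* A function phi on {-1,...,n-1} with phi(-1)=0 is represented by a
   sequence s with phi(m) = nth 0 s m for m >= 0 (the value at -1 is never
   used since k*(n) >= 0). *)

Definition u_op (s : seq {poly int}) (n k : nat) : {poly int} :=
  'X^(2 * k + 2) * nth 0 s (n - k - 1) + nth 0 s k
  + (\sum_(0 <= i < k.+1) 'X^i) * (\sum_(k <= j < n.-1) 'X^j).

Definition kstar (n : nat) : nat := (n - 2 ^ trunc_log 2 n)%N.

(* value f*(n) computed from the table s = [f*(0); ...; f*(n-1)] *)
Definition fstar_next (s : seq {poly int}) (n : nat) : {poly int} :=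
  match n with
  | 0 | 1 => 0
  | 2 => 1
  | 3 => 'X^2 + 1
  | 4 => 'X^4 + 2%:R * 'X^2 + 'X + 1
  | _ => u_op s n (kstar n)
  end.

Fixpoint fstar_tab (m : nat) : seq {poly int} :=
  match m with
  | 0 => [:: 0]
  | m'.+1 => rcons (fstar_tab m') (fstar_next (fstar_tab m') m)
  end.

Definition fstar (n : nat) : {poly int} := nth 0 (fstar_tab n) n.

(* coefficient sequence, 1-indexed: entry i (i >= 1) is the coefficient of
   q^(deg p + 1 - i), i.e. leading coefficient first, then zeros *)
Definition coefseq (p : {poly int}) (i : nat) : int :=
  if (1 <= i <= size p)%N then p`_(size p - i) else 0.

Definition lex_lt (p r : {poly int}) : Prop :=
  exists i : nat, (1 <= i)%N /\ coefseq p i < coefseq r i /\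
    forall j : nat, (1 <= j < i)%N -> coefseq p j = coefseq r j.

(* Main.v *)
Require Import Defs.
From mathcomp Require Import all_boot all_order all_algebra.
From mathcomp Require Import zify ring.
Import Order.TTheory GRing.Theory Num.Theory.
Local Open Scope ring_scope.

Notation F := fstar.

Lemma size_tab m : size (fstar_tab m) = m.+1.
Proof. by elim: m => //= m IH; rewrite size_rcons IH. Qed.

Lemma tab_nth m j : (j <= m)%N -> nth 0 (fstar_tab m) j = F j.
Proof.
elim: m => [|m IH] Hj; first by move: Hj; rewrite leqn0 => /eqP ->.
rewrite leq_eqVlt in Hj; case/orP: Hj => [/eqP ->|Hj]; first by [].
rewrite /= nth_rcons size_tab Hj IH //.
Qed.

Lemma F_next n : F n.+1 = fstar_next (fstar_tab n) n.+1.
Proof. by rewrite /fstar /= nth_rcons size_tab ltnn eqxx. Qed.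

Definition Sm (a b : nat) : {poly int} := \sum_(a <= j < b) 'X^j.

Lemma kstar_eq t n : (2 ^ t <= n < 2 ^ t.+1)%N -> kstar n = (n - 2 ^ t)%N.
Proof. by move=> H; rewrite /kstar (trunc_log_eq (isT : (1 < 2)%N) H). Qed.

Lemma F_rec n : (4 <= n)%N ->
  F n = 'X^(2 * kstar n + 2) * F (n - kstar n - 1) + F (kstar n)
        + Sm 0 (kstar n).+1 * Sm (kstar n) n.-1.
Proof.
case: n => // n Hn. rewrite F_next.
have [H4|H5] := leqP n.+1 4.
  have -> : n.+1 = 4%N by lia.
  have -> : kstar 4 = 0%N by rewrite (@kstar_eq 2).
  rewrite /= /Sm /fstar /= !big_nat_recr //= !big_nil.
  rewrite !expr0. ring.
have -> : fstar_next (fstar_tab n) n.+1 = u_op (fstar_tab n) n.+1 (kstar n.+1).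
  by case: n Hn H5 => [|[|[|[|n]]]].
have Hk : (kstar n.+1 < n.+1)%N.
  rewrite /kstar; have := @trunc_log_gt0 2 n.+1. lia.
rewrite /u_op !tab_nth //; lia.
Qed.

Lemma coefS a b j : (Sm a b)`_j = (a <= j < b)%N%:R.
Proof.
rewrite /Sm; elim: b => [|b IH]; first by rewrite big_geq // coef0 ltn0 andbF.
have [Hab|Hab] := leqP a b.
  rewrite big_nat_recr //= coefD IH coefXn.
  have [Hj|Hj|Hj] := ltngtP j b.
  - have -> : (a <= j < b.+1)%N = (a <= j)%N by lia. by rewrite andbT addr0.
  - have -> : (a <= j < b.+1)%N = false by lia. by rewrite andbF addr0.
  - subst j. by rewrite andbF add0r Hab ltnSn.
rewrite big_geq // coef0. have -> : (a <= j < b.+1)%N = false by lia. by [].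
Qed.

Lemma size_S a b : (size (Sm a b) <= b)%N.
Proof. apply/leq_sizeP => j Hj; rewrite coefS. have -> : (a <= j < b)%N = false by lia. by []. Qed.

Lemma F0 : F 0 = 0. Proof. by []. Qed.
Lemma F1 : F 1 = 0. Proof. by rewrite F_next. Qed.
Lemma F2 : F 2 = 1. Proof. by rewrite F_next. Qed.
Lemma F3 : F 3 = 'X^2 + 1. Proof. by rewrite F_next. Qed.

Lemma kfacts n : (4 <= n)%N -> exists m, [/\ (4 <= m)%N, (m <= n < 2 * m)%N, kstar n = (n - m)%N & exists t, m = (2 ^ t)%N].
Proof.
move=> Hn. exists (2 ^ trunc_log 2 n)%N.
have H1 := @trunc_logP 2 n isT (ltn_trans (isT : (0 < 3)%N) Hn).
have H2 := @trunc_log_ltn 2 n isT.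
have H3 : (2 <= trunc_log 2 n)%N by apply: trunc_log_max.
rewrite expnS in H2.
split.
- by have := leq_pexp2l (isT : (0 < 2)%N) H3 ; rewrite (_ : 2 ^ 2 = 4)%N.
- by rewrite H1.
- by [].
- by exists (trunc_log 2 n).
Qed.

Lemma F4 : F 4 = 'X^4 + 2%:R * 'X^2 + 'X + 1. Proof. by rewrite F_next. Qed.

Lemma size_prodS k n : (size (Sm 0 k.+1 * Sm k n.-1)%R <= k + n.-1)%N.
Proof.
apply: leq_trans (size_mul_leq _ _) _.
have := size_S 0 k.+1; have := size_S k n.-1. lia.
Qed.

Lemma partA n : (forall j, (2 * n - 3 <= j)%N -> (F n)`_j = 0) /\
                ((2 <= n)%N -> (F n)`_(2 * n - 4) = 1).
Proof.
elim/ltn_ind: n => n IH.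
case: n IH => [|[|[|[|[|n]]]]] IH.
- by rewrite F0; split => // j _; rewrite coef0.
- by rewrite F1; split => // j _; rewrite coef0.
- rewrite F2; split => [j Hj|_]; rewrite coefC //; case: j Hj => //.
- rewrite F3; split => [j Hj|_]; rewrite coefD coefXn coefC //.
  by do 3 (case: j Hj => [|j] Hj //).
- rewrite F4; split => [j Hj|_]; rewrite !coefD mulr_natl coefMn !coefXn coefX coefC //.
  by do 5 (case: j Hj => [|j] Hj //).
set N := n.+4.+1.
have HN : (4 <= N)%N by [].
have [m [Hm Hmn Hk _]] := kfacts N HN.
rewrite (F_rec N HN) Hk.
have Hlt : (N - (N - m) - 1 < N)%N by lia.
have [IH1 IH2] := IH _ Hlt.
have [IK _] := IH (N - m)%N ltac:(lia).
have Hsz := size_prodS (N - m) N.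
have Hz : forall j, (2 * N - 4 <= j)%N -> (Sm 0 (N - m).+1 * Sm (N - m) N.-1)%R`_j = 0.
  move=> j Hj; apply/leq_sizeP: j Hj; apply: leq_trans Hsz _; lia.
split.
- move=> j Hj. rewrite !coefD coefXnM Hz; last by lia.
  rewrite IK; last by lia.
  rewrite IH1; last by lia.
  by case: ifP; rewrite !addr0.
- move=> _. rewrite !coefD coefXnM Hz // IK; last by lia.
  have -> : (2 * N - 4 < 2 * (N - m) + 2)%N = false by lia.
  have -> : (2 * N - 4 - (2 * (N - m) + 2) = 2 * (N - (N - m) - 1) - 4)%N by lia.
  by rewrite IH2 ?addr0 //; lia.
Qed.

Lemma Sm_shift a b : Sm a.+1 b.+1 = 'X * Sm a b.
Proof. by rewrite /Sm big_add1 /= mulr_sumr; apply: eq_bigr => i _; rewrite exprS. Qed.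

Lemma Sm0S k : Sm 0 k.+2 = 1 + 'X * Sm 0 k.+1.
Proof.
rewrite /Sm big_nat_recl // expr0 mulr_sumr; congr (_ + _).
by apply: eq_bigr => i _; rewrite exprS.
Qed.

Lemma Sm01 : Sm 0 1 = 1.
Proof. by rewrite /Sm big_nat1 expr0. Qed.

Lemma kstar_m n m t : m = (2 ^ t)%N -> (m <= n < 2 * m)%N -> kstar n = (n - m)%N.
Proof. move=> -> H; apply: kstar_eq; by rewrite expnS. Qed.

Lemma step n : (3 <= n)%N -> forall j, (n.-1 <= j)%N ->
  (F n.+1 - 'X^2 * F n)`_j = (j == n.-1)%:R.
Proof.
move=> Hn j Hj.
have HN : (4 <= n.+1)%N by [].
have [m [Hm Hmn Hk [t Ht]]] := kfacts n.+1 HN.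
have [Hmeq|Hmlt] := eqVneq m n.+1.
- rewrite Hmeq subnn in Hk.
  rewrite (F_rec n.+1 HN) Hk muln0 add0n subn0 subn1 /= Sm01 mul1r F0 addr0.
  rewrite addrC addKr coefS. congr (_%:R). lia.
- have Hn4 : (4 <= n)%N by lia.
  have Hkn : kstar n = (n - m)%N by apply: (kstar_m _ _ _ Ht); lia.
  rewrite (F_rec n.+1 HN) (F_rec n Hn4) Hk Hkn.
  set k := (n - m)%N.
  have -> : (n.+1 - m = k.+1)%N by rewrite /k; lia.
  have -> : (n.+1 - k.+1 - 1 = n - k - 1)%N by lia.
  have -> : (2 * k.+1 + 2 = 2 + (2 * k + 2))%N by lia.
  have En : n = (n.-1).+1 by lia.
  have HS : Sm k.+1 n = 'X * Sm k n.-1 by rewrite -Sm_shift -En.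
  rewrite /= Sm0S HS exprD.
  set P := 'X^(2 * k + 2). set B := Sm k n.-1. set A := Sm 0 k.+1.
  set G := F (n - k - 1). set X2 := 'X^2.
  have -> : X2 = 'X * 'X by rewrite /X2 expr2.
  have -> : 'X * 'X * P * G + F k.+1 + (1 + 'X * A) * ('X * B) - 'X * 'X * (P * G + F k + A * B)
     = F k.+1 - 'X * 'X * F k + 'X * B by ring.
  rewrite -HS coefD coefB -expr2 coefXnM.
  have [IA _] := partA k.+1. have [IB _] := partA k.
  rewrite IA; last by rewrite /k; lia.
  rewrite IB; last by rewrite /k; lia.
  rewrite coefS. have -> : (j < 2)%N = false by lia.
  rewrite subrr add0r. congr (_%:R). rewrite /k; lia.
Qed.

Lemma sizeF n : (2 <= n)%N -> size (F n) = (2 * n - 3)%N.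
Proof.
move=> Hn; have [A B] := partA n.
apply/eqP; rewrite eqn_leq; apply/andP; split.
  by apply/leq_sizeP.
rewrite leqNgt; apply/negP => H.
have H' : (size (F n) <= 2 * n - 4)%N by lia.
move/leq_sizeP: H' => H'; have := H' _ (leqnn _).
by rewrite B.
Qed.

Lemma coefseqF n i : (3 <= n)%N -> (1 <= i <= n)%N -> coefseq (F n) i = (F n)`_(2 * n - 3 - i).
Proof.
move=> Hn Hi; rewrite /coefseq sizeF; last by lia.
by have -> : (1 <= i <= 2 * n - 3)%N by lia.
Qed.

Lemma stepc n i : (3 <= n)%N -> (1 <= i <= n)%N ->
  coefseq (F n.+1) i = coefseq (F n) i + (i == n)%:R.
Proof.
move=> Hn Hi; rewrite !coefseqF //; try lia.
have := step n Hn (2 * n.+1 - 3 - i)%N ltac:(lia).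
rewrite coefB coefXnM.
have -> : (2 * n.+1 - 3 - i < 2)%N = false by lia.
have -> : (2 * n.+1 - 3 - i - 2 = 2 * n - 3 - i)%N by lia.
have -> : (2 * n.+1 - 3 - i == n.-1)%N = (i == n) by apply/eqP/eqP; lia.
move=> H; rewrite -H; ring.
Qed.

Lemma chain n n' i : (3 <= n)%N -> (n < n')%N -> (1 <= i <= n)%N ->
  coefseq (F n') i = coefseq (F n) i + (i == n)%:R.
Proof.
move=> Hn; elim: n' => // n' IH Hlt Hi.
rewrite ltnS leq_eqVlt in Hlt; case/orP: Hlt => [/eqP <-|Hlt].
  by rewrite stepc.
rewrite stepc; [|lia|lia]. rewrite IH //.
have -> : (i == n') = false by lia. by rewrite addr0.
Qed.

Theorem lemma3p40 :
  (forall n : nat, (2 <= n)%N ->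
     (size (fstar n)).-1 = (2 * n - 4)%N /\ lead_coef (fstar n) = 1)
  /\
  (forall n n' : nat, (3 <= n)%N -> (n < n')%N ->
     lex_lt (fstar n) (fstar n')
     /\ (forall j : nat, (1 <= j < n)%N -> coefseq (fstar n) j = coefseq (fstar n') j)
     /\ coefseq (fstar n) n != coefseq (fstar n') n
     /\ `|coefseq (fstar n') n - coefseq (fstar n) n| = 1).
Proof.
split.
  move=> n Hn; rewrite lead_coefE sizeF //.
  have -> : (2 * n - 3).-1 = (2 * n - 4)%N by lia.
  split => //. by have [_ ->] := partA n.
move=> n n' Hn Hlt.
have Hn0 : coefseq (F n') n = coefseq (F n) n + 1.
  by rewrite (chain n n' n) // ?eqxx //; lia.
have Hj : forall j, (1 <= j < n)%N -> coefseq (F n) j = coefseq (F n') j.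
  move=> j Hj; rewrite (chain n n' j) //; last by lia.
  have -> : (j == n) = false by lia. by rewrite addr0.
split; [|split; [exact: Hj|split]].
- exists n; split; first lia. split; last exact: Hj.
  by rewrite Hn0 ltrDl.
- by rewrite Hn0 -subr_eq0 opprD addrA subrr add0r oppr_eq0.
- by rewrite Hn0 addrC addKr.
Qed.
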